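(* Let $\mathcal W$ be a monotonic game on $[n]$, $i\neq j$ players, and $\hat{\mathcal W}$ the game obtained by imposing a symmetric weak quarrel between $i$ and $j$. Then the Shapley–Shubik index satisfies $\hat\psi^{SS}_i\le\psi^{SS}_i$ and $\hat\psi^{SS}_j\le\psi^{SS}_j$, where $\psi^{SS}$ and $\hat\psi^{SS}$ denote the index computed in $\mathcal W$ and $\hat{\mathcal W}$ respectively.
   Context: Players are $[n]=\{1,\dots,n\}$. A binary voting game on $[n]$ is identified with its collection $\mathcal W\subseteq 2^{[n]}$ of winning sets ($S\in\mathcal W$ means the division in which exactly the members of $S$ vote YES has outcome YES). It is monotonic if $T\subseteq S$ and $T\in\mathcal W$ imply $S\in\mathcal W$. Player $i$ is YES-decisive for $S$ in a game $\mathcal W$ if $i\in S$, $S\in\mathcal W$ and $S\setminus\{i\}\notin\mathcal W$. Symmetric weak quarrel between $i$ and $j$: for every $S\subseteq[n]\setminus\{i,j\}$, $S\cup\{i,j\}\in\hat{\mathcal W}\iff (S\cup\{i\}\in\mathcal W\text{ or }S\cup\{j\}\in\mathcal W)$; $S\in\hat{\mathcal W}\iff (S\cup\{i\}\in\mathcal W\text{ and }S\cup\{j\}\in\mathcal W)$; $S\cup\{i\}\in\hat{\mathcal W}\iff S\cup\{i\}\in\mathcal W$; $S\cup\{j\}\in\hat{\mathcal W}\iff S\cup\{j\}\in\mathcal W$. Shapley–Shubik index: for an ordering $\sigma=(\sigma_1,\dots,\sigma_n)$ of $[n]$, player $i$ is pivotal in $\sigma$ if $\sigma_k=i$ and $i$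 is YES-decisive for $\{\sigma_1,\dots,\sigma_k\}$; then $\psi^{SS}_i=\frac{1}{n!}\#\{\sigma: i\text{ is pivotal in }\sigma\}$. *)

(* Defs.v *)
From mathcomp Require Import all_boot all_order all_algebra all_fingroup.
Set Implicit Arguments. Unset Strict Implicit. Unset Printing Implicit Defensive.
Import GRing.Theory Num.Theory.

(* A binary voting game on players 'I_n (= [n], shifted to 0..n-1) is its set
   of winning coalitions. *)
Definition game (n : nat) := {set {set 'I_n}}.

Definition monotonic n (W : game n) : Prop :=
  forall S T : {set 'I_n}, T \subset S -> T \in W -> S \in W.

Definition yes_decisive n (W : game n) (i : 'I_n) (S : {set 'I_n}) : bool :=
  [&& i \in S, S \in W & (S :\ i) \notin W].

Definition sym_weak_quarrel n (W What : game n) (i j : 'I_n) : Prop :=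
  forall S : {set 'I_n}, i \notin S -> j \notin S ->
    [/\ (i |: (j |: S) \in What) = ((i |: S \in W) || (j |: S \in W)),
        (S \in What) = ((i |: S \in W) && (j |: S \in W)),
        (i |: S \in What) = (i |: S \in W) &
        (j |: S \in What) = (j |: S \in W)].

(* For an ordering sigma (a permutation; sigma k = the player in position k),
   the set of players up to and including position k. *)
Definition predecessors n (sigma : {perm 'I_n}) (k : 'I_n) : {set 'I_n} :=
  [set sigma l | l : 'I_n & l <= k].

Definition pivotal n (W : game n) (sigma : {perm 'I_n}) (i : 'I_n) : bool :=
  [exists k : 'I_n, (sigma k == i) && yes_decisive W i (predecessors sigma k)].

Definition shapley_shubik n (W : game n) (i : 'I_n) : rat :=
  ((#|[set sigma : {perm 'I_n} | pivotal W sigma i]|)%:R / (n`!)%:R)%R.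

(* Main.v *)
Require Import Defs.
From mathcomp Require Import all_boot all_order all_algebra all_fingroup.
Import GRing.Theory Num.Theory.
Local Open Scope ring_scope.

Lemma swq_sym n (W What : game n) i j :
  sym_weak_quarrel W What i j -> sym_weak_quarrel W What j i.
Proof.
move=> H S jS iS; have [h1 h2 h3 h4] := H S iS jS; split => //.
- by rewrite setUCA h1 orbC.
- by rewrite h2 andbC.
Qed.

Lemma dec_impl n (W What : game n) i j (P : {set 'I_n}) :
  monotonic W -> i != j -> sym_weak_quarrel W What i j ->
  yes_decisive What i P -> yes_decisive W i P.
Proof.
move=> mon ij H /and3P[iP PW PiW].
set S := P :\ i :\ j.
have iS : i \notin S by rewrite !inE eqxx andbF.
have jS : j \notin S by rewrite !inE eqxx.
have [h1 h2 h3 h4] := H S iS jS.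
rewrite /yes_decisive iP /=.
case jP: (j \in P).
- have EP : P = i |: (j |: S).
    apply/setP => x; rewrite !inE; case: (x =P i) => [->|]; first by rewrite iP.
    by case: (x =P j) => [->|] //=; rewrite jP.
  have EPi : P :\ i = j |: S.
    apply/setP => x; rewrite !inE; case: (x =P i) => [->|] /=.
      by rewrite (negbTE ij).
    by case: (x =P j) => [->|] //=; rewrite jP.
  move: PW PiW; rewrite EPi {1}EP h1 h4 => PW PiW.
  rewrite (negbTE PiW) orbF in PW.
  rewrite PiW andbT.
  apply: mon PW; rewrite EP; apply/subsetP => x; rewrite !inE.
  by case/orP => ->; rewrite ?orbT.
- have EP : P = i |: S.
    apply/setP => x; rewrite !inE; case: (x =P i) => [->|]; first by rewrite iP.
    by case: (x =P j) => [->|] //=; rewrite jP.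
  have EPi : P :\ i = S.
    apply/setP => x; rewrite !inE; case: (x =P i) => [->|] /=.
      by rewrite (negbTE ij) ?eqxx ?andbF.
    by case: (x =P j) => [->|] //=; rewrite jP.
  move: PW PiW; rewrite EPi {1}EP h3 h2 => PW PiW.
  rewrite PW /= in PiW.
  rewrite EP PW /=; apply/negP => SW; apply: (negP PiW).
  by apply: mon SW; apply/subsetP => x; rewrite !inE => ->; rewrite orbT.
Qed.

Lemma ss_le n (W What : game n) i j :
  monotonic W -> i != j -> sym_weak_quarrel W What i j ->
  shapley_shubik What i <= shapley_shubik W i.
Proof.
move=> mon ij H; rewrite /shapley_shubik ler_wpM2r ?invr_ge0 ?ler0n //.
rewrite ler_nat; apply/subset_leq_card/subsetP => s; rewrite !inE.
case/existsP => k /andP[sk yd]; apply/existsP; exists k.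
by rewrite sk /=; exact: (dec_impl _ _ _ _ _ _ mon ij H yd).
Qed.

Theorem theorem14 (n : nat) (W What : game n) (i j : 'I_n) :
  monotonic W -> i != j -> sym_weak_quarrel W What i j ->
  shapley_shubik What i <= shapley_shubik W i /\
  shapley_shubik What j <= shapley_shubik W j.
Proof.
move=> mon ij H; split; first exact: (ss_le _ _ _ _ _ mon ij H).
by apply: (ss_le _ _ _ _ _ mon _ (swq_sym _ _ _ _ _ H)); rewrite eq_sym.
Qed.
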